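(* Let $(E,\pi,M)$ be a bundle with a $C^1$ connection $\Delta^h$, let $\{u^I\}$ be bundle coordinates, $\Gamma_\mu^a$ the coefficients of $\Delta^h$ in the frame $\{X_I\}$ adapted to $\{\partial/\partial u^I\}$, and $U$ an open set in the domain of $\{u^I\}$. If the normal coordinates equation $$\Big(\frac{\partial\tilde u^a}{\partial u^b}\Gamma_\mu^b+\frac{\partial\tilde u^a}{\partial u^\mu}\Big)\Big|_U=0$$ admits solutions $\{\tilde u^a\}$ (fibre components of bundle coordinates) on $U$, then $R^a_{\mu\nu}|_U=0$, where $$R^a_{\mu\nu}=\partial_\mu(\Gamma_\nu^a)-\partial_\nu(\Gamma_\mu^a)+\Gamma_\mu^b\partial_b(\Gamma_\nu^a)-\Gamma_\nu^b\partial_b(\Gamma_\mu^a)=X_\mu(\Gamma_\nu^a)-X_\nu(\Gamma_\mu^a),\qquad \partial_I=\partial/\partial u^I,$$ are the fibre components of the curvature of $\Delta^h$.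
   Context: $\dim M=n$, fibre dimension $r$; indices $\mu,\nu$ over $1,\dots,n$, $a,b$ over $n+1,\dots,n+r$, $I$ over $1,\dots,n+r$; summation convention. Bundle coordinates: $u^\mu=x^\mu\circ\pi$ for base coordinates. Vertical distribution $\Delta^v_p=T_p(\pi^{-1}(\pi(p)))$; a connection is an $n$-dimensional distribution $\Delta^h$ with $\Delta^v_p\oplus\Delta^h_p=T_p(E)$. The adapted frame is $X_\mu=(\pi_*|_{\Delta^h})^{-1}\pi_*(\partial_\mu)$, $X_a=\partial_a$, and $X_\mu=\partial_\mu+\Gamma_\mu^b\partial_b$ defines $\Gamma_\mu^a$. *)

(* Defs.v *)
From HB Require Import structures.
From mathcomp Require Import all_boot all_order all_algebra.
From mathcomp Require Import all_classical all_reals all_analysis.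
Set Implicit Arguments. Unset Strict Implicit. Unset Printing Implicit Defensive.
Import Order.TTheory GRing.Theory Num.Theory.
Import numFieldNormedType.Exports.
Local Open Scope classical_set_scope.
Local Open Scope ring_scope.

(* Coordinates (u^1..u^n, u^{n+1}..u^{n+r}) are points of 'rV[R]_(n + r).
   Base index mu : 'I_n is the coordinate lshift r mu, fibre index a : 'I_r
   is the coordinate rshift n a. *)

Definition ecoord {R : realType} {N : nat} (I : 'I_N) : 'rV[R]_N := delta_mx 0 I.

Definition pd {R : realType} {N : nat} (f : 'rV[R]_N -> R) (I : 'I_N)
  (x : 'rV[R]_N) : R := 'D_(ecoord I) f x.

Definition C1_on {R : realType} {N : nat} (U : set 'rV[R]_N) (f : 'rV[R]_N -> R) :=
  forall I : 'I_N, forall x, U x ->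
    derivable f x (ecoord I) /\ {for x, continuous (pd f I)}.

Definition C2_on {R : realType} {N : nat} (U : set 'rV[R]_N) (f : 'rV[R]_N -> R) :=
  C1_on U f /\ forall I : 'I_N, C1_on U (pd f I).

Definition newcoords {R : realType} {n r : nat} (ut : 'I_r -> 'rV[R]_(n + r) -> R)
  (I : 'I_(n + r)) (x : 'rV[R]_(n + r)) : R :=
  match fintype.split I with
  | inl mu => x 0 (lshift r mu)
  | inr a => ut a x
  end.

(* ut are fibre components of bundle coordinates on U: the map (u^mu, ut^a) is
   a C^2 chart on U (injective with invertible Jacobian at every point of U). *)
Definition fibre_coords_on {R : realType} {n r : nat} (U : set 'rV[R]_(n + r))
  (ut : 'I_r -> 'rV[R]_(n + r) -> R) :=
  (forall a, C2_on U (ut a)) /\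
  {in U &, injective (fun x => \row_I newcoords ut I x)} /\
  (forall x, U x ->
     (\matrix_(I, J) pd (newcoords ut I) J x) \in unitmx).

Definition curv {R : realType} {n r : nat} (Gam : 'I_n -> 'I_r -> 'rV[R]_(n + r) -> R)
  (a : 'I_r) (mu nu : 'I_n) (x : 'rV[R]_(n + r)) : R :=
  pd (Gam nu a) (lshift r mu) x - pd (Gam mu a) (lshift r nu) x
  + \sum_(b < r) (Gam mu b x * pd (Gam nu a) (rshift n b) x
                  - Gam nu b x * pd (Gam mu a) (rshift n b) x).

(* Main.v *)
Require Import Defs.
From HB Require Import structures.
From mathcomp Require Import all_boot all_order all_algebra.
From mathcomp Require Import all_classical all_reals all_analysis.
From mathcomp Require Import ring lra.
Import Order.TTheory GRing.Theory Num.Theory.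
Import numFieldNormedType.Exports.
Local Open Scope classical_set_scope.
Local Open Scope ring_scope.

Section S.
Variables (R : realType) (V : normedModType R).

Lemma line_derive (f : V -> R) (u w : V) (s : R) :
  derivable f (s *: u + w) u ->
  is_derive s 1 (fun h : R => f (h *: u + w)) ('D_u f (s *: u + w)).
Proof.
move=> df.
have E : (fun h : R => h^-1 *: (((fun h0 : R => f (h0 *: u + w)) \o shift s) (h *: 1)
      - f (s *: u + w))) =
    (fun h : R => h^-1 *: ((f \o shift (s *: u + w)) (h *: u) - f (s *: u + w))).
  apply/funext => h /=; congr (_ *: (f _ - _)).
  by rewrite /shift /= scalerDl [_%:A]mulr1 addrA.
split; rewrite /derivable /derive E //.
Qed.

Lemma mvt0 (g dg : R -> R) (s : R) : 0 < s ->
  (forall t, 0 <= t <= s -> is_derive t 1 g (dg t)) ->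
  exists2 c, 0 < c < s & g s - g 0 = dg c * s.
Proof.
move=> s0 hd.
have H1 : forall t, t \in `]0, s[%R -> is_derive t 1 g (dg t).
  by move=> t; rewrite in_itv /= => /andP[a b]; apply: hd; rewrite !ltW.
have H2 : {within `[0, s], continuous g}.
  apply: continuous_in_subspaceT => t; rewrite inE /= in_itv /= => tI.
  have [dg1 _] := hd t tI.
  by apply: differentiable_continuous; apply/derivable1_diffP.
have [c cI E] := MVT s0 H1 H2.
by exists c; [move: cI; rewrite in_itv /= |rewrite E subr0].
Qed.

Lemma square (f : V -> R) (u v x : V) (s : R) : 0 < s ->
  (forall a b : R, 0 <= a <= s -> 0 <= b <= s ->
     derivable f (a *: u + (b *: v + x)) u /\
     derivable ('D_u f) (a *: u + (b *: v + x)) v) ->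
  exists c d, [/\ 0 < c < s, 0 < d < s &
   f (s *: u + (s *: v + x)) - f (s *: u + x) - f (s *: v + x) + f x
     = s * s * 'D_v ('D_u f) (c *: u + (d *: v + x))].
Proof.
move=> s0 hd.
have s0' : 0 <= s <= s.
  by rewrite (ltW s0) /= le_refl.
have z0 : (0:R) <= 0 <= s by rewrite lexx ltW.
pose g := fun h : R => f (h *: u + (s *: v + x)) - f (h *: u + x).
pose dg : R -> R := fun h : R => 'D_u f (h *: u + (s *: v + x)) - 'D_u f (h *: u + x).
have [c cI Ec] : exists2 c, 0 < c < s & g s - g 0 = dg c * s.
  apply: mvt0 => // t tI; apply: is_deriveB.
    by apply: line_derive; have [] := hd t s tI s0'.
  apply: line_derive; have [] := hd t 0 tI z0.
  by rewrite scale0r add0r.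
pose k : R -> R := fun h : R => 'D_u f (h *: v + (c *: u + x)).
pose dk : R -> R := fun h : R => 'D_v ('D_u f) (h *: v + (c *: u + x)).
have cI' : 0 <= c <= s by case/andP: cI => a b; rewrite !ltW.
have [d dI Ed] : exists2 d, 0 < d < s & k s - k 0 = dk d * s.
  apply: (@mvt0 k dk s s0) => t tI; apply: line_derive.
  by have [] := hd c t cI' tI; rewrite addrCA.
exists c, d; split => //.
move: Ec Ed; rewrite /g /dg /k /dk !scale0r !add0r => Ec Ed.
have -> : f (s *: u + (s *: v + x)) - f (s *: u + x) - f (s *: v + x) + f x
  = g s - g 0 by rewrite /g !scale0r !add0r; lra.
rewrite /g !scale0r !add0r Ec (addrCA (c *: u)) Ed.
by rewrite (addrCA (d *: v)) -mulrA mulrC.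
Qed.

Lemma inball (u v x : V) (d : R) : 0 < d ->
  let eps := d / (`|u| + `|v| + 1) in
  forall a b : R, 0 <= a <= eps -> 0 <= b <= eps ->
  ball x d (a *: u + (b *: v + x)).
Proof.
move=> d0 eps a b /andP[a0 ae] /andP[b0 be].
have nu := normr_ge0 u; have nv := normr_ge0 v.
have N0 : 0 < `|u| + `|v| + 1 by lra.
have e0 : 0 < eps by rewrite /eps divr_gt0.
have hd : eps * (`|u| + `|v| + 1) = d by rewrite /eps divfK // gt_eqF.
rewrite -ball_normE /ball_ /= distrC addrA addrK.
apply: (le_lt_trans (ler_normD _ _)); rewrite !normrZ.
rewrite (ger0_norm a0) (ger0_norm b0).
have h1 : a * `|u| <= eps * `|u| by rewrite ler_wpM2r.
have h2 : b * `|v| <= eps * `|v| by rewrite ler_wpM2r.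
nra.
Qed.

Lemma schwarz (f : V -> R) (u v x : V) :
  (\forall y \near x, [/\ derivable f y u, derivable f y v,
      derivable ('D_u f) y v & derivable ('D_v f) y u]) ->
  {for x, continuous ('D_v ('D_u f))} -> {for x, continuous ('D_u ('D_v f))} ->
  'D_v ('D_u f) x = 'D_u ('D_v f) x.
Proof.
move=> hd cA cB.
apply/eqP; rewrite -subr_eq0 -normr_le0; apply/ler_addgt0Pr => e e0; rewrite add0r.
have e20 : 0 < e / 2 by rewrite divr_gt0.
move: (cA) => /cvgr_dist_lt /(_ _ e20) hA.
move: (cB) => /cvgr_dist_lt /(_ _ e20) hB.
have H := @filterI V (nbhs x) _ _ _ hd (@filterI V (nbhs x) _ _ _ hA hB).

have {H} H := H (nbhs_filter x) (nbhs_filter x).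
have [d /= d0 Hb] := (@nbhs_ballP R V x _).1 H.
have nu := normr_ge0 u; have nv := normr_ge0 v.
have N0 : 0 < `|u| + `|v| + 1 by lra.
pose eps := d / (`|u| + `|v| + 1).
have e0' : 0 < eps by rewrite /eps divr_gt0.
have hin1 : forall a b : R, 0 <= a <= eps -> 0 <= b <= eps ->
  ball x d (a *: u + (b *: v + x)).
  move=> a b ha hb; exact: (@inball u v x d d0 a b ha hb).
have hin2 : forall a b : R, 0 <= a <= eps -> 0 <= b <= eps ->
  ball x d (a *: v + (b *: u + x)).
  by move=> a b ha hb; rewrite addrCA; apply: hin1.
clearbody eps.
have [c1 [d1 [c1I d1I E1]]] : exists c d0, [/\ 0 < c < eps, 0 < d0 < eps &
   f (eps *: u + (eps *: v + x)) - f (eps *: u + x) - f (eps *: v + x) + f x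
     = eps * eps * 'D_v ('D_u f) (c *: u + (d0 *: v + x))].
  apply: (@square f u v x eps e0') => a b ha hb.
  by have [[h1 _ h3 _] _] := Hb _ (hin1 a b ha hb).
have [c2 [d2 [c2I d2I E2]]] : exists c d0, [/\ 0 < c < eps, 0 < d0 < eps &
   f (eps *: v + (eps *: u + x)) - f (eps *: v + x) - f (eps *: u + x) + f x
     = eps * eps * 'D_u ('D_v f) (c *: v + (d0 *: u + x))].
  apply: (@square f v u x eps e0') => a b ha hb.
  by have [[_ h1 _ h3] _] := Hb _ (hin2 a b ha hb).
have Ef : f (eps *: u + (eps *: v + x)) - f (eps *: u + x) - f (eps *: v + x) + f x
  = f (eps *: v + (eps *: u + x)) - f (eps *: v + x) - f (eps *: u + x) + f x.
  rewrite (addrCA (eps *: v)).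
  by rewrite -!addrA; congr (_ + _); rewrite !addrA; congr (_ + _); rewrite addrC.
have Eq := etrans (esym E1) (etrans Ef E2).
have ee : eps * eps != 0 := mulf_neq0 (lt0r_neq0 e0') (lt0r_neq0 e0').
move/(mulfI ee): Eq => Eq.
have W : forall c, 0 < c < eps -> 0 <= c <= eps.
  by move=> c /andP[a b]; rewrite !ltW.
have [_ [h1 _]] := Hb _ (hin1 c1 d1 (W _ c1I) (W _ d1I)).
have [_ [_ h2]] := Hb _ (hin2 c2 d2 (W _ c2I) (W _ d2I)).
have E3 : 'D_v ('D_u f) x - 'D_u ('D_v f) x =
  ('D_v ('D_u f) x - 'D_v ('D_u f) (c1 *: u + (d1 *: v + x))) -
  ('D_u ('D_v f) x - 'D_u ('D_v f) (c2 *: v + (d2 *: u + x))).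
  by rewrite Eq opprB addrA subrK.
rewrite E3; apply: (le_trans (ler_normB _ _)).
have := ltrD h1 h2; rewrite -splitr => H4; exact: ltW H4.
Qed.

End S.

Section S2.
Variables (R : realType) (V : normedModType R).

Lemma stepA (r : nat) (U : set V) (x : V) (g G : 'I_r -> V -> R) (k : V -> R) (v : V) :
  nbhs x U -> (forall y, U y -> \sum_(b < r) g b y * G b y + k y = 0) ->
  (forall b, derivable (g b) x v) -> (forall b, derivable (G b) x v) ->
  derivable k x v ->
  \sum_(b < r) ('D_v (g b) x * G b x + g b x * 'D_v (G b) x) + 'D_v k x = 0.
Proof.
move=> nU h0 dg dG dk.
have dM : forall b, derivable (g b * G b) x v by move=> b; exact: (derivableM (dg b) (dG b)).
have E : 'D_v (\sum_(b < r) (g b * G b) + k) x = 0.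
  rewrite (@near_eq_derive _ _ _ _ (cst 0)) ?derive_cst //.
  apply: filterS nU => y Uy /=; rewrite fct_sumE; exact: h0.
rewrite deriveD ?derive_sum // in E; last exact: derivable_sum.
apply: etrans E; congr (_ + _); apply: eq_bigr => b _.
rewrite (deriveM (dg b) (dG b)).
rewrite addrC; congr (_ + _); exact: mulrC.
Qed.

End S2.

Lemma pd_sym (R : realType) (N : nat) (U : set 'rV[R]_N) (f : 'rV[R]_N -> R) x (I J : 'I_N) :
  open U -> U x -> C2_on U f -> pd (pd f J) I x = pd (pd f I) J x.
Proof.
move=> oU Ux [h1 h2].
have nU : nbhs x U by apply: oU.
have cA := (h2 J I x Ux).2.
have cB := (h2 I J x Ux).2.
have H : \forall y \near x, [/\ derivable f y (ecoord J), derivable f y (ecoord I),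
   derivable ('D_(ecoord J) f) y (ecoord I) & derivable ('D_(ecoord I) f) y (ecoord J)].
  apply: filterS nU => y Uy; split.
  - exact: (h1 J y Uy).1.
  - exact: (h1 I y Uy).1.
  - exact: (h2 J I y Uy).1.
  - exact: (h2 I J y Uy).1.
exact: (@schwarz R _ f (ecoord J) (ecoord I) x H cA cB).
Qed.

Lemma pd_coord (R : realType) (N : nat) (K J : 'I_N) (x : 'rV[R]_N) :
  pd (fun y : 'rV[R]_N => y 0 K) J x = (K == J)%:R.
Proof.
rewrite /pd /derive; apply: lim_near_cst; last first.
  near=> h.
  have hn : h != 0 by near: h; exact: nbhs_dnbhs_neq.
  rewrite /= /ecoord !mxE eqxx /= addrK.
  exact: (mulKf hn).
exact: Rhausdorff.
Unshelve. all: by end_near.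
Qed.

Lemma curv_alg (R : realFieldType) (n r : nat) (S : 'I_(n + r) -> 'I_(n + r) -> R)
  (G : 'I_n -> 'I_r -> R) (DG : 'I_n -> 'I_r -> 'I_(n + r) -> R) (Df : 'I_r -> R)
  (mu nu : 'I_n) :
  (forall I J, S I J = S J I) ->
  (forall m I, \sum_(b < r) (S I (rshift n b) * G m b + Df b * DG m b I)
               + S I (lshift r m) = 0) ->
  \sum_(b < r) Df b * (DG nu b (lshift r mu) - DG mu b (lshift r nu)
     + \sum_(c < r) (G mu c * DG nu b (rshift n c) - G nu c * DG mu b (rshift n c)))
  = 0.
Proof.
move=> Ss E.
have Ea : forall m m' : 'I_n,
  \sum_(b < r) (S (lshift r m') (rshift n b) * G m b)
  + \sum_(b < r) Df b * DG m b (lshift r m') + S (lshift r m') (lshift r m) = 0.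
  by move=> m m'; have := E m (lshift r m'); rewrite big_split.
have Eb : forall m m' : 'I_n,
  \sum_(c < r) \sum_(b < r) G m' c * S (rshift n c) (rshift n b) * G m b
  + \sum_(c < r) \sum_(b < r) G m' c * Df b * DG m b (rshift n c)
  + \sum_(c < r) G m' c * S (rshift n c) (lshift r m) = 0.
  move=> m m'.
  have E3 : \sum_(c < r) G m' c * (\sum_(b < r) (S (rshift n c) (rshift n b) * G m b
        + Df b * DG m b (rshift n c)) + S (rshift n c) (lshift r m)) = 0.
    by rewrite big1 // => c _; rewrite E mulr0.
  apply: etrans E3; rewrite -!big_split /=; apply: eq_bigr => c _.
  rewrite mulrDr mulr_sumr -big_split /=; congr (_ + _).
  by apply: eq_bigr => b _; rewrite mulrDr !mulrA.
have E1 := Ea nu mu; have E2 := Ea mu nu; have E3 := Eb nu mu; have E4 := Eb mu nu.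

have K1 : \sum_(c < r) G mu c * S (rshift n c) (lshift r nu)
        = \sum_(b < r) S (lshift r nu) (rshift n b) * G mu b.
  by apply: eq_bigr => c _; rewrite Ss mulrC.
have K2 : \sum_(c < r) G nu c * S (rshift n c) (lshift r mu)
        = \sum_(b < r) S (lshift r mu) (rshift n b) * G nu b.
  by apply: eq_bigr => c _; rewrite Ss mulrC.
have C : \sum_(c < r) \sum_(b < r) G mu c * S (rshift n c) (rshift n b) * G nu b
       = \sum_(c < r) \sum_(b < r) G nu c * S (rshift n c) (rshift n b) * G mu b.
  rewrite exchange_big; apply: eq_bigr => c _; apply: eq_bigr => b _.
  by rewrite Ss; ring.
have L : S (lshift r mu) (lshift r nu) = S (lshift r nu) (lshift r mu) by apply: Ss.
have D : forall m m' : 'I_n, \sum_(c < r) \sum_(b < r) G m' c * Df b * DG m b (rshift n c)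
   = \sum_(b < r) \sum_(c < r) Df b * (G m' c * DG m b (rshift n c)).
  move=> m m'; rewrite exchange_big; apply: eq_bigr => b _; apply: eq_bigr => c _; ring.
have -> : \sum_(b < r) Df b * (DG nu b (lshift r mu) - DG mu b (lshift r nu)
     + \sum_(c < r) (G mu c * DG nu b (rshift n c) - G nu c * DG mu b (rshift n c)))
  = \sum_(b < r) Df b * DG nu b (lshift r mu) - \sum_(b < r) Df b * DG mu b (lshift r nu)
   + (\sum_(b < r) \sum_(c < r) Df b * (G mu c * DG nu b (rshift n c))
     - \sum_(b < r) \sum_(c < r) Df b * (G nu c * DG mu b (rshift n c))).
  rewrite -!sumrB -big_split /=; apply: eq_bigr => b _.
  by rewrite -sumrB mulrDr mulrBr mulr_sumr; congr (_ + _); apply: eq_bigr => c _; rewrite mulrBr.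
rewrite -!D.
lra.
Qed.

Theorem proposition5p4 (R : realType) (n r : nat)
  (Gam : 'I_n -> 'I_r -> 'rV[R]_(n + r) -> R)
  (U : set 'rV[R]_(n + r)) (ut : 'I_r -> 'rV[R]_(n + r) -> R) :
  open U ->
  (forall mu a, C1_on U (Gam mu a)) ->
  fibre_coords_on U ut ->
  (forall (a : 'I_r) (mu : 'I_n) x, U x ->
     \sum_(b < r) pd (ut a) (rshift n b) x * Gam mu b x
     + pd (ut a) (lshift r mu) x = 0) ->
  forall (a : 'I_r) (mu nu : 'I_n) x, U x -> curv Gam a mu nu x = 0.
Proof.
move=> oU hG [hut [_ hJac]] heq a mu nu x Ux.
have nU : nbhs x U by apply: oU.
have EA : forall (a' : 'I_r) (m : 'I_n) (I : 'I_(n + r)),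
  \sum_(b < r) (pd (pd (ut a') (rshift n b)) I x * Gam m b x
     + pd (ut a') (rshift n b) x * pd (Gam m b) I x)
  + pd (pd (ut a') (lshift r m)) I x = 0.
  move=> a' m I.
  exact: (@stepA R _ r U x (fun b => pd (ut a') (rshift n b)) (Gam m)
    (pd (ut a') (lshift r m)) (ecoord I) nU (fun y Uy => heq a' m y Uy)
    (fun b => ((hut a').2 (rshift n b) I x Ux).1)
    (fun b => (hG m b I x Ux).1)
    (((hut a').2 (lshift r m) I x Ux).1)).
have EB : forall a' : 'I_r,
    \sum_(b < r) pd (ut a') (rshift n b) x * curv Gam b mu nu x = 0.
  move=> a'.
  have h := (@curv_alg R n r (fun I J => pd (pd (ut a') J) I x)
     (fun m b => Gam m b x) (fun m b I => pd (Gam m b) I x)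
     (fun b => pd (ut a') (rshift n b) x) mu nu
     (fun I J => @pd_sym R _ U (ut a') x I J oU Ux (hut a')) (EA a')).
  rewrite /curv; exact: h.
have sl : forall m : 'I_n, fintype.split (lshift r m) = inl m := fun m => unsplitK (inl m).
have sr : forall b : 'I_r, fintype.split (rshift n b) = inr b := fun b => unsplitK (inr b).
pose w : 'cV[R]_(n + r) := \col_J (match fintype.split J with inl _ => 0 | inr b => curv Gam b mu nu x end).
pose M := \matrix_(I, J) pd (newcoords ut I) J x.
have Mw : M *m w = 0.
  apply/matrixP => I j; rewrite !mxE big_split_ord /=.
  rewrite big1 ?add0r; last by move=> m _; rewrite !mxE sl mulr0.
  rewrite -[I]splitK; case: (fintype.split I) => [m|a'] /=.
    rewrite big1 // => b _; rewrite !mxE sr.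
    have -> : newcoords ut (lshift r m) = fun y => y 0 (lshift r m).
      by apply/funext => y; rewrite /newcoords sl.
    by rewrite pd_coord eq_lrshift mul0r.
  rewrite -[RHS](EB a'); apply: eq_bigr => b _; rewrite !mxE sr.
  have -> : newcoords ut (rshift n a') = ut a'.
    by apply/funext => y; rewrite /newcoords sr.
  by [].
have w0 : w = 0.
  by rewrite -(mulKmx (hJac x Ux) w) -/M Mw mulmx0.
have := congr1 (fun A : 'cV[R]_(n + r) => A (rshift n a) 0) w0.
by rewrite /w !mxE sr.
Qed.
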